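(* Let $K$ be a field, $V$ a finite-dimensional $K$-vector space, $W$ a subspace and $U$ a complement of $W$, so $V=W\oplus U$. Let $\operatorname{CWAff}_W(V)$ be the group of all $W$-coset-wise $K$-affine functions $V\to V$ that are permutations of $V$. Let $\operatorname{Aff}(W)\wr_{\mathrm{imp}}\operatorname{Sym}(U)$ be the permutation group on $W\times U$ consisting of all maps $(w,u)\mapsto(a_u(w),\sigma(u))$ with $\sigma\in\operatorname{Sym}(U)$ and $a_u\in\operatorname{Aff}(W)$ for each $u\in U$. Let $\iota:V\to W\times U$, $w+u\mapsto(w,u)$ ($w\in W,u\in U$). Then $\sigma\mapsto\iota\circ\sigma\circ\iota^{-1}$ maps $\operatorname{CWAff}_W(V)$ bijectively onto $\operatorname{Aff}(W)\wr_{\mathrm{imp}}\operatorname{Sym}(U)$ (i.e., $\iota$ is an isomorphism of permutation groups). Moreover, for every family $(\alpha_u)_{u\in U}$ of automorphisms of $W$ and every family $(v_u)_{u\in U}$ of vectors of $V$, written $v_u=\omega_u+\nu_u$ with $\omega_u\in W$, $\nu_u\in U$, such that the map $f:V\to V$, $w+u\mapsto \alpha_u(w)+u+v_u$ ($w\in W,u\in U$) is a permutation, the map $g:U\to U$, $u\mapsto u+\nu_u$, is a permutation of $U$ and $\iota\circ f\circ\iota^{-1}$ is the permutation $(w,u)\mapsto(\alpha_u(w)+\omega_u,\ g(u))$ of $W\times U$.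
   Context: A function $f:V\to V$ is $W$-coset-wise $K$-affine if for each coset $C$ of $W$ in $V$ there are $v_C\in V$ and a $K$-endomorphism $\varphi_C$ of $V$ with $\varphi_C(W)\subseteq W$ such that $f(x)=\varphi_C(x)+v_C$ for all $x\in C$. $\operatorname{Aff}(W)$ denotes the group of affine permutations of $W$, i.e., maps $w\mapsto\alpha(w)+\omega$ with $\alpha$ a $K$-automorphism of $W$ and $\omega\in W$. *)

(* Defs.v *)
From HB Require Import structures.
From mathcomp Require Import all_boot all_order all_algebra.
Set Implicit Arguments. Unset Strict Implicit. Unset Printing Implicit Defensive.
Import GRing.Theory.
Local Open Scope ring_scope.

Section Defs.
Variables (K : fieldType) (vT : vectType K).

Definition coset_wise_affine (W : {vspace vT}) (f : vT -> vT) : Prop :=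
  forall x0 : vT, exists phi : 'End(vT), (phi @: W <= W)%VS /\
    exists v : vT, forall x, x - x0 \in W -> f x = phi x + v.

Definition is_affine_perm (W : {vspace vT}) (a : subvs_of W -> subvs_of W) : Prop :=
  exists alpha : {linear subvs_of W -> subvs_of W}, bijective alpha /\
    exists omega : subvs_of W, forall w, a w = alpha w + omega.

Definition in_wreath (W U : {vspace vT})
    (h : subvs_of W * subvs_of U -> subvs_of W * subvs_of U) : Prop :=
  exists sigma : subvs_of U -> subvs_of U, bijective sigma /\
  exists a : subvs_of U -> subvs_of W -> subvs_of W,
    (forall u, is_affine_perm (a u)) /\
    forall w u, h (w, u) = (a u w, sigma u).

Definition iota_dec (W U : {vspace vT}) (x : vT) : subvs_of W * subvs_of U :=
  (vsproj W (daddv_pi W U x), vsproj U (daddv_pi U W x)).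

Definition iota_inv (W U : {vspace vT}) (p : subvs_of W * subvs_of U) : vT :=
  vsval p.1 + vsval p.2.

Definition iota_conj (W U : {vspace vT}) (f : vT -> vT) :=
  fun p : subvs_of W * subvs_of U => iota_dec W U (f (iota_inv p)).

End Defs.

Arguments coset_wise_affine {K vT} W f.
Arguments is_affine_perm {K vT W} a.
Arguments in_wreath {K vT W U} h.
Arguments iota_dec {K vT} W U x.
Arguments iota_inv {K vT W U} p.
Arguments iota_conj {K vT} W U f p.

(* Main.v *)
Require Import Defs.
From HB Require Import structures.
From mathcomp Require Import all_boot all_order all_algebra.
From Stdlib Require Import ClassicalEpsilon.
Import GRing.Theory.
Local Open Scope ring_scope.

Lemma bij_of_inj_surj (A B : Type) (f : A -> B) :
  injective f -> (forall y, exists x, f x = y) -> bijective f.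
Proof.
move=> fi fs.
pose g := fun y => proj1_sig (constructive_indefinite_description _ (fs y)).
have gK : cancel g f by move=> y; rewrite /g; case: constructive_indefinite_description.
exists g => // x; apply: fi; exact: gK.
Qed.

Lemma lin_inj_surj (K : fieldType) (vT : vectType K) (L : 'End(vT)) :
  injective L -> forall y, exists x, L x = y.
Proof.
move=> Li y; exists ((L^-1)%VF y).
by rewrite (lker0_lfunVK (introT lker0P Li)).
Qed.

Section Dec.
Variables (K : fieldType) (vT : vectType K) (W U : {vspace vT}).
Hypotheses (hcap : (W :&: U = 0)%VS) (hsum : (W + U = fullv)%VS).
Local Notation pW := (daddv_pi W U).
Local Notation pU := (daddv_pi U W).

Lemma pW_id x : x \in W -> pW x = x.
Proof. exact: daddv_pi_id. Qed.
Lemma pU_id x : x \in U -> pU x = x.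
Proof. by apply: daddv_pi_id; rewrite capvC. Qed.
Lemma decomp x : pW x + pU x = x.
Proof. by apply: daddv_pi_add => //; rewrite hsum memvf. Qed.
Lemma pW_U x : x \in U -> pW x = 0.
Proof. by move=> xU; have := decomp x; rewrite pU_id // => /(canRL (addrK x)); rewrite subrr. Qed.
Lemma pU_W x : x \in W -> pU x = 0.
Proof. by move=> xW; have := decomp x; rewrite pW_id // addrC => /(canRL (addrK x)); rewrite subrr. Qed.

Lemma iota_invK x : iota_inv (iota_dec W U x) = x.
Proof. by rewrite /iota_inv /iota_dec /= !vsprojK ?memv_pi // decomp. Qed.

Lemma iota_decK p : iota_dec W U (iota_inv p) = p.
Proof.
case: p => w u; rewrite /iota_dec /iota_inv /= !linearD /=.
rewrite pW_id ?subvsP // pW_U ?subvsP // pU_W ?subvsP // pU_id ?subvsP //.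
by rewrite !linear0 addr0 add0r !vsvalK.
Qed.

Lemma iota_dec_inj : injective (iota_dec W U).
Proof. by move=> x y e; rewrite -(iota_invK x) e iota_invK. Qed.

Lemma part4 (alpha : subvs_of U -> {linear subvs_of W -> subvs_of W})
          (v : subvs_of U -> vT) :
     (forall u, bijective (alpha u)) ->
     let f := fun x : vT =>
       vsval (alpha (iota_dec W U x).2 (iota_dec W U x).1) + vsval (iota_dec W U x).2
       + v (iota_dec W U x).2 in
     let omega := fun u => (iota_dec W U (v u)).1 in
     let nu := fun u => (iota_dec W U (v u)).2 in
     let g := fun u : subvs_of U => u + nu u in
     bijective f ->
     bijective g /\
     forall w u, iota_conj W U f (w, u) = (alpha u w + omega u, g u).
Proof.
move=> abij f omega nu g fbij.
have form : forall w u, iota_conj W U f (w, u) = (alpha u w + omega u, g u).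
  move=> w u; rewrite /iota_conj /f iota_decK /= /omega /g /nu /iota_dec /=.
  rewrite !linearD /= pW_id ?subvsP // pW_U ?subvsP //.
  rewrite pU_W ?subvsP // pU_id ?subvsP //.
  by rewrite !linear0 addr0 add0r !vsvalK.
split; last exact: form.
apply: bij_of_inj_surj.
  move=> u1 u2 e.
  have [w2 hw2] : exists w2, alpha u2 w2 = omega u1 - omega u2.
    by case: (abij u2) => ainv _ K2; exists (ainv (omega u1 - omega u2)); rewrite K2.
  have : iota_conj W U f (0, u1) = iota_conj W U f (w2, u2).
    by rewrite !form linear0 add0r hw2 subrK e.
  rewrite /iota_conj => /iota_dec_inj /(bij_inj fbij).
  by move/(can_inj iota_decK) => [].
move=> u'; case: fbij => finv _ fK'.
exists (iota_dec W U (finv (vsval u'))).2.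
have := form (iota_dec W U (finv (vsval u'))).1 (iota_dec W U (finv (vsval u'))).2.
rewrite -surjective_pairing /iota_conj iota_invK fK'.
move=> /(congr1 snd) /= <-.
by rewrite pU_id ?subvsP // vsvalK.
Qed.

Lemma part2 (f1 f2 : vT -> vT) :
  iota_conj W U f1 =1 iota_conj W U f2 -> f1 =1 f2.
Proof.
move=> e x; have := e (iota_dec W U x); rewrite /iota_conj.
by move/iota_dec_inj; rewrite iota_invK.
Qed.

Lemma part3 h : in_wreath h -> exists f : vT -> vT,
      [/\ bijective f, coset_wise_affine W f & iota_conj W U f =1 h].
Proof.
move=> [sigma [sbij [a [aaff hform]]]].
have abij : forall u, bijective (a u).
  move=> u; have [alpha [albij [om hom]]] := aaff u.
  apply: bij_of_inj_surj.
    by move=> w1 w2; rewrite !hom => /addIr /(bij_inj albij).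
  by move=> y; case: albij => ainv _ K2; exists (ainv (y - om)); rewrite hom K2 subrK.
pose f := fun x => iota_inv (h (iota_dec W U x)).
exists f; split.
- apply: bij_of_inj_surj.
    move=> x y; rewrite /f => /(can_inj iota_decK) e; apply: iota_dec_inj; move: e.
    case: (iota_dec W U x) => w1 u1; case: (iota_dec W U y) => w2 u2.
    rewrite !hform => -[e1 e2].
    have eu := bij_inj sbij e2; subst u2.
    by move: e1 => /(bij_inj (abij _)) ->.
  move=> y; case: sbij => sinv sK sK'.
  case: (abij (sinv (iota_dec W U y).2)) => ainv aK aK'.
  exists (iota_inv (ainv (iota_dec W U y).1, sinv (iota_dec W U y).2)).
  by rewrite /f iota_decK hform aK' sK' -surjective_pairing iota_invK.
- move=> x0.
  set u0 := vsproj U (pU x0).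
  have [alpha [_ [om hom]]] := aaff u0.
  pose phi := linfun (vsval \o alpha \o vsproj W \o pW).
  exists phi; split.
    by apply/subvP => y /memv_imgP [z _ ->]; rewrite lfunE /= subvsP.
  exists (vsval om + vsval (sigma u0)) => x hx.
  have ex : pU x = pU x0.
    by apply/eqP; rewrite -subr_eq0 -linearB; apply/eqP/pU_W.
  rewrite /f /iota_dec ex hform hom lfunE /iota_inv /=.
  by rewrite addrA.
- by move=> p; rewrite /iota_conj /f !iota_decK.
Qed.
Lemma part1 (f : vT -> vT) : bijective f -> coset_wise_affine W f ->
      in_wreath (iota_conj W U f).
Proof.
move=> fbij fcwa.
have X : forall u : subvs_of U, {phi : 'End(vT) & {v : vT | (phi @: W <= W)%VS /\
    forall x, x - vsval u \in W -> f x = phi x + v}}.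
  move=> u; have [phi [hW hv]] := constructive_indefinite_description _ (fcwa (vsval u)).
  have [v hv'] := constructive_indefinite_description _ hv.
  by exists phi, v.
pose phi u := projT1 (X u).
pose vv u := proj1_sig (projT2 (X u)).
have hW : forall u, (phi u @: W <= W)%VS := fun u => proj1 (proj2_sig (projT2 (X u))).
have hv : forall u x, x - vsval u \in W -> f x = phi u x + vv u :=
  fun u => proj2 (proj2_sig (projT2 (X u))).
pose c u := phi u (vsval u) + vv u.
have phiW : forall u x, x \in W -> phi u x \in W.
  by move=> u x xW; apply: (subvP (hW u)); apply: memv_img.
have F : forall (w : subvs_of W) u, f (vsval w + vsval u) = phi u (vsval w) + c u.
  by move=> w u; rewrite (hv u) ?addrK ?subvsP // linearD addrA.
pose alpha u := linfun (vsproj W \o phi u \o vsval : subvs_of W -> subvs_of W).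
have alphaE : forall u w, alpha u w = vsproj W (phi u (vsval w)).
  by move=> u w; rewrite lfunE.
have valalpha : forall u w, vsval (alpha u w) = phi u (vsval w).
  by move=> u w; rewrite alphaE vsprojK // phiW // subvsP.
have alpha_inj : forall u, injective (alpha u).
  move=> u w1 w2 /(congr1 vsval); rewrite !valalpha => e.
  have : f (vsval w1 + vsval u) = f (vsval w2 + vsval u) by rewrite !F e.
  by move/(bij_inj fbij)/addIr/subvs_inj.
have alpha_surj : forall u y, exists w, alpha u w = y.
  by move=> u; apply: lin_inj_surj.
pose sigma u := vsproj U (pU (c u)).
pose omega u := vsproj W (pW (c u)).
exists sigma; split.
  apply: bij_of_inj_surj.
    move=> u1 u2 /(congr1 vsval); rewrite !vsprojK ?memv_pi // => e.
    have dW : c u1 - c u2 \in W.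
      rewrite -(decomp (c u1 - c u2)) [pU _]linearB /= e subrr addr0.
      exact: memv_pi.
    have [w2 hw2] := alpha_surj u2 (vsproj W (c u1 - c u2)).
    have : f (vsval (0 : subvs_of W) + vsval u1) = f (vsval w2 + vsval u2).
      by rewrite !F -(valalpha u2 w2) hw2 vsprojK // !linear0 add0r subrK.
    move/(bij_inj fbij)/(congr1 pU).
    rewrite !linearD /= linear0 (pU_W _ (subvsP w2)) !pU_id ?subvsP // !add0r.
    by move/subvs_inj.
  move=> u'; case: fbij => finv _ fK'.
  set x := finv (vsval u').
  exists (vsproj U (pU x)).
  have : f (vsval (vsproj W (pW x)) + vsval (vsproj U (pU x))) = vsval u'.
    by rewrite !vsprojK ?memv_pi // decomp fK'.
  rewrite F => /(congr1 pU).
  rewrite linearD /= pU_W ?phiW ?subvsP // add0r (pU_id _ (subvsP u')) => e.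
  by rewrite /sigma e vsvalK.
exists (fun u w => alpha u w + omega u); split.
  move=> u; exists (fun_of_lfun (alpha u) : {linear _ -> _}); split.
    exact: bij_of_inj_surj (alpha_inj u) (alpha_surj u).
  by exists (omega u).
move=> w u; rewrite /iota_conj /iota_inv /= F /iota_dec !linearD /=.
rewrite pW_id ?phiW ?subvsP // pU_W ?phiW ?subvsP //.
by rewrite linear0 add0r alphaE /omega /sigma /c !linearD.
Qed.

End Dec.

Theorem theorem4p3 (K : fieldType) (vT : vectType K) (W U : {vspace vT})
    (hcap : (W :&: U = 0)%VS) (hsum : (W + U = fullv)%VS) :
  ((forall f : vT -> vT, bijective f -> coset_wise_affine W f ->
      in_wreath (iota_conj W U f)) /\
   (forall f1 f2 : vT -> vT,
      bijective f1 -> coset_wise_affine W f1 ->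
      bijective f2 -> coset_wise_affine W f2 ->
      iota_conj W U f1 =1 iota_conj W U f2 -> f1 =1 f2) /\
   (forall h, in_wreath h -> exists f : vT -> vT,
      [/\ bijective f, coset_wise_affine W f & iota_conj W U f =1 h])) /\
  (forall (alpha : subvs_of U -> {linear subvs_of W -> subvs_of W})
          (v : subvs_of U -> vT),
     (forall u, bijective (alpha u)) ->
     let f := fun x : vT =>
       vsval (alpha (iota_dec W U x).2 (iota_dec W U x).1) + vsval (iota_dec W U x).2
       + v (iota_dec W U x).2 in
     let omega := fun u => (iota_dec W U (v u)).1 in
     let nu := fun u => (iota_dec W U (v u)).2 in
     let g := fun u : subvs_of U => u + nu u in
     bijective f ->
     bijective g /\
     forall w u, iota_conj W U f (w, u) = (alpha u w + omega u, g u)).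
Proof.
split; last exact: part4 hcap hsum.
split; first exact: part1 hcap hsum.
split; last exact: part3 hcap hsum.
move=> f1 f2 _ _ _ _; exact: (@part2 _ _ _ _ hcap hsum).
Qed.
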